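(* Let $\mathcal S\subset\mathbb R^n$ be a finite positive spanning set of unit vectors and $P=\{x\in\mathbb R^n: x^\top d\le 1 \text{ for all } d\in\mathcal S\}$. (i) Let $x$ be a vertex of $P$, $\mathcal T=\{d\in\mathcal S: x^\top d=1\}$, and let $\mathcal B\subseteq\mathcal T$ be a basis of $\mathbb R^n$. Then $\frac{x}{\|x\|}$ is a Gram vector of $\mathcal B$ with Gram value $\frac1{\|x\|}$, and $K^\circ\!\left(\mathcal B,\frac{x}{\|x\|}\right)\cap\mathcal S=\varnothing$. (ii) Let $\mathcal B\subseteq\mathcal S$ be a basis of $\mathbb R^n$ and $u$ the Gram vector of $\mathcal B$ with Gram value $\alpha$. If $K^\circ(\mathcal B,u)\cap\mathcal S=\varnothing$, then $\frac u\alpha$ is the unique vertex of $P$ such that $\left(\frac u\alpha\right)^\top d=1$ for all $d\in\mathcal B$.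
   Context: A finite set $\{d_1,\dots,d_k\}\subset\mathbb R^n$ is positive spanning if $\{\sum_i\lambda_id_i:\lambda_i\ge0\}=\mathbb R^n$. For a basis $\mathcal B=\{d_1,\dots,d_n\}$ of $\mathbb R^n$, a Gram vector of $\mathcal B$ with Gram value $\gamma_{\mathcal B}$ is a unit vector $u$ with $u^\top d_i=\gamma_{\mathcal B}>0$ for all $i$. For a set $\mathcal B$ of unit vectors and a unit vector $y$ with $d^\top y=\alpha_{\mathcal B}$ for all $d\in\mathcal B$ (a common value), $K^\circ(\mathcal B,y)=\{v\in\mathbb R^n: v\ne\mathbf 0,\ \frac{v^\top y}{\|v\|\|y\|}>\alpha_{\mathcal B}\}\cup\{\mathbf 0\}$. *)

(* Defs.v *)
From HB Require Import structures.
From mathcomp Require Import all_boot all_order all_algebra.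
Set Implicit Arguments. Unset Strict Implicit. Unset Printing Implicit Defensive.
Import Order.TTheory GRing.Theory Num.Theory.
Local Open Scope ring_scope.

Section Defs.
Variables (R : rcfType) (n : nat).
Notation vec := 'rV[R]_n.

Definition dotp (u v : vec) : R := \sum_(i < n) u 0 i * v 0 i.
Definition enorm (u : vec) : R := Num.sqrt (dotp u u).

Definition positive_spanning (S : seq vec) : Prop :=
  forall v : vec, exists lam : vec -> R,
    (forall d, d \in S -> 0 <= lam d) /\ v = \sum_(d <- S) lam d *: d.

Definition polyP (S : seq vec) (x : vec) : Prop :=
  forall d, d \in S -> dotp x d <= 1.

Definition is_vertex (S : seq vec) (x : vec) : Prop :=
  polyP S x /\
  forall (y z : vec) (t : R), polyP S y -> polyP S z -> 0 < t < 1 ->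
    x = t *: y + (1 - t) *: z -> y = z.

Definition is_gram_vector (B : seq vec) (u : vec) (g : R) : Prop :=
  enorm u = 1 /\ 0 < g /\ forall d, d \in B -> dotp u d = g.

(* common value alpha_B = d^T y (taken at the first element of B; it is
   common to all d in B whenever K_circ is used in the paper) *)
Definition alphaB (B : seq vec) (y : vec) : R := dotp (head 0 B) y.

Definition in_Kcirc (B : seq vec) (y v : vec) : Prop :=
  v = 0 \/ (v != 0 /\ dotp v y / (enorm v * enorm y) > alphaB B y).

End Defs.

(* Main.v *)
Require Import Defs.
From HB Require Import structures.
From mathcomp Require Import all_boot all_order all_algebra.
From mathcomp Require Import lra.
Import Order.TTheory GRing.Theory Num.Theory.
Local Open Scope ring_scope.
Set Implicit Arguments.

Section L.
Variables (R : rcfType) (n : nat).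
Implicit Types u v w : 'rV[R]_n.

Lemma dotpC u v : dotp u v = dotp v u.
Proof. by apply: eq_bigr => i _; rewrite mulrC. Qed.

Lemma dotpDl u v w : dotp (u + v) w = dotp u w + dotp v w.
Proof. by rewrite /dotp -big_split; apply: eq_bigr => i _; rewrite !mxE mulrDl. Qed.

Lemma dotpZl a u w : dotp (a *: u) w = a * dotp u w.
Proof. by rewrite /dotp mulr_sumr; apply: eq_bigr => i _; rewrite !mxE mulrA. Qed.

Lemma dotp0l w : dotp 0 w = 0.
Proof. by rewrite /dotp big1 // => i _; rewrite mxE mul0r. Qed.

Lemma dotpNl u w : dotp (- u) w = - dotp u w.
Proof. by rewrite -scaleN1r dotpZl mulN1r. Qed.

Lemma dotp_ge0 u : 0 <= dotp u u.
Proof. by apply: sumr_ge0 => i _; rewrite -expr2 sqr_ge0. Qed.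

Lemma dotp_eq0 u : dotp u u = 0 -> u = 0.
Proof.
move=> /eqP; rewrite /dotp psumr_eq0; last by move=> i _; rewrite -expr2 sqr_ge0.
move=> /allP H; apply/rowP => i; rewrite mxE.
have /H : i \in index_enum 'I_n by rewrite mem_index_enum.
by rewrite implyTb mulf_eq0 orbb => /eqP.
Qed.

Lemma dotp_suml I (r : seq I) (P : pred I) (F : I -> 'rV[R]_n) w :
  dotp (\sum_(i <- r | P i) F i) w = \sum_(i <- r | P i) dotp (F i) w.
Proof.
by apply: (big_morph (fun u => dotp u w) (fun u v => dotpDl u v w) (dotp0l w)).
Qed.

Lemma enormZ a u : enorm (a *: u) = `|a| * enorm u.
Proof.
rewrite /enorm dotpZl dotpC dotpZl mulrA -expr2 sqrtrM ?sqr_ge0 //.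
by rewrite sqrtr_sqr.
Qed.

Lemma enorm_eq0 u : enorm u = 0 -> u = 0.
Proof. by move=> /eqP; rewrite /enorm sqrtr_eq0 => H; apply: dotp_eq0; apply/eqP; rewrite eq_le H dotp_ge0. Qed.

Lemma enorm0 : enorm (0 : 'rV[R]_n) = 0.
Proof. by rewrite /enorm dotp0l sqrtr0. Qed.

Lemma orth_basis (B : seq 'rV[R]_n) v :
  basis_of fullv B -> (forall d, d \in B -> dotp v d = 0) -> v = 0.
Proof.
move=> /andP[/eqP sp _] H; apply: dotp_eq0.
have vs : v \in span (in_tuple B) by rewrite /= sp memvf.
rewrite {1}(coord_span vs) dotp_suml big1 // => i _.
by rewrite dotpZl dotpC H ?mulr0 // mem_nth.
Qed.

Lemma basis_ne (B : seq 'rV[R]_n) : (0 < n)%N -> basis_of fullv B -> B != [::].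
Proof.
move=> n0 /andP[/eqP sp _]; apply/eqP => B0; move: sp; rewrite B0 span_nil => h.
move: (dimvf 'rV[R]_n); rewrite -h dimv0 dim_matrix. by case: (n) n0. Qed.
End L.

Lemma orth_uniq (R : rcfType) (n : nat) (B : seq 'rV[R]_n) x y :
  basis_of fullv B -> (forall d, d \in B -> dotp x d = 1) ->
  (forall d, d \in B -> dotp y d = 1) -> x = y.
Proof.
move=> bas hx hy; apply/eqP; rewrite -subr_eq0; apply/eqP.
by apply: (orth_basis _ bas) => d dB; rewrite dotpDl dotpNl hx // hy // subrr.
Qed.

Theorem theorem8 (R : rcfType) (n : nat) (S : seq 'rV[R]_n) :
  (0 < n)%N ->
  (forall d, d \in S -> enorm d = 1) ->
  positive_spanning S ->
  (* (i) *)
  (forall (x : 'rV[R]_n) (B : seq 'rV[R]_n),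
     is_vertex S x ->
     {subset B <= [seq d <- S | dotp x d == 1]} ->
     basis_of fullv B ->
     is_gram_vector B ((enorm x)^-1 *: x) (enorm x)^-1 /\
     (forall d, d \in S -> ~ in_Kcirc B ((enorm x)^-1 *: x) d)) /\
  (* (ii) *)
  (forall (B : seq 'rV[R]_n) (u : 'rV[R]_n) (alpha : R),
     {subset B <= S} ->
     basis_of fullv B ->
     is_gram_vector B u alpha ->
     (forall d, d \in S -> ~ in_Kcirc B u d) ->
     [/\ is_vertex S (alpha^-1 *: u),
         (forall d, d \in B -> dotp (alpha^-1 *: u) d = 1) &
         (forall x, is_vertex S x -> (forall d, d \in B -> dotp x d = 1) ->
            x = alpha^-1 *: u)]).
Proof.
move=> n0 Sn _; split.
- move=> x B [Px _] sub bas.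
  have Bd d : d \in B -> d \in S /\ dotp x d = 1.
    by move=> /sub; rewrite mem_filter => /andP[/eqP -> ->].
  have Bne := @basis_ne _ _ B n0 bas.
  case: B Bne sub bas Bd => [//|b B] _ sub bas Bd.
  have x0 : x != 0.
    apply/eqP => x0; have [_] := Bd b (mem_head _ _).
    by rewrite x0 dotp0l => /eqP; rewrite eq_sym oner_eq0.
  have nx : 0 < enorm x.
    rewrite lt_def sqrtr_ge0 andbT; apply/eqP => /enorm_eq0 h.
    by rewrite h eqxx in x0.
  have ny : enorm ((enorm x)^-1 *: x) = 1.
    by rewrite enormZ gtr0_norm ?invr_gt0 // mulVf // gt_eqF.
  split.
    split=> //; split; first by rewrite invr_gt0.
    by move=> d /Bd [_ h]; rewrite dotpZl h mulr1.
  move=> d dS [d0|[_]].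
    by move: (Sn d dS); rewrite d0 enorm0 => /eqP; rewrite eq_sym oner_eq0.
  rewrite /alphaB /= ny (Sn d dS) mulr1 divr1.
  rewrite ![dotp _ (_ *: x)]dotpC !dotpZl (Bd b (mem_head _ _)).2 mulr1.
  rewrite ltNge => /negP; apply.
  by rewrite -[leRHS]mulr1 ler_pM2l ?invr_gt0 // Px.
- move=> B u alpha sub bas [nu [a0 gu]] K.
  have Bne := @basis_ne _ _ B n0 bas.
  have hb : head 0 B \in B by case: (B) Bne => //= b B' _; rewrite mem_head.
  have Pu d : d \in S -> dotp u d <= alpha.
    move=> dS; have := K d dS; rewrite /in_Kcirc => h.
    have d0 : d != 0.
      apply/eqP => d0; move: (Sn d dS); rewrite d0 enorm0 => /eqP.
      by rewrite eq_sym oner_eq0.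
    rewrite leNgt; apply/negP => lt; apply: h; right; split=> //.
    rewrite (Sn d dS) nu mulr1 divr1 /alphaB [dotp (head 0 B) u]dotpC gu //.
    by rewrite dotpC.
  have g1 d : d \in B -> dotp (alpha^-1 *: u) d = 1.
    by move=> dB; rewrite dotpZl gu // mulVf // gt_eqF.
  have P0 : Defs.polyP S (alpha^-1 *: u).
    move=> d dS; rewrite dotpZl.
    by rewrite -(mulVf (lt0r_neq0 a0)) ler_pM2l ?invr_gt0 // Pu.
  split=> //.
    split=> // y z t Py Pz /andP[t0 t1] e.
    have hy d : d \in B -> dotp y d = 1 /\ dotp z d = 1.
      move=> dB; have := g1 d dB; rewrite e dotpDl !dotpZl => h.
      have := Py d (sub d dB); have := Pz d (sub d dB); nra.
    by apply: (orth_uniq _ bas) => d /hy [].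
  move=> x _ hx; exact: (orth_uniq _ bas).
Qed.
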